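(* Let $\frac{A}{B}\in \mathcal{F}_n(k)$ and $u\in k^\times$. Then the Bézout form of $\frac{X}{u} \oplus^{\mathrm{N}} \frac{A}{B}$ is conjugate by an element of $\mathbf{SL}_{n+1}(k)$ to the block diagonal form $\langle u \rangle \oplus \mathrm{B\acute{e}z}_n(A,B)$.
   Context: Let $k$ be a field. $\mathcal{F}_n(k)$ is the set of pointed degree $n$ rational functions $\frac AB$: $A\in k[X]$ monic of degree $n$, $\deg B<n$, $\mathrm{res}_{n,n}(A,B)\neq0$, with unique Bézout relation $AU+BV=1$ ($\deg U\leq n-2$, $\deg V\leq n-1$). The law $\oplus^{\mathrm{N}}$: $\frac{A_1}{B_1}\oplus^{\mathrm{N}}\frac{A_2}{B_2}=\frac{A_3}{B_3}$ with $\begin{bmatrix}A_3 & -V_3\\ B_3 & U_3\end{bmatrix} = \begin{bmatrix}A_1 & -V_1\\ B_1 & U_1\end{bmatrix}\begin{bmatrix}A_2 & -V_2\\ B_2 & U_2\end{bmatrix}$; in particular $\frac{X}{u}\oplus^{\mathrm{N}}\frac AB=\frac{XA-B/u}{uA}$. The Bézout form $\mathrm{B\acute{e}z}_n(A,B)$ is the symmetric bilinear form on $k^n$ with Gram matrix $[c_{p,q}]_{1\le p,q\le n}$ where $\frac{A(X)B(Y)-A(Y)B(X)}{X-Y}=\sum c_{p,q}X^{p-1}Y^{q-1}$. $\langle u\rangle$ is the rank one form with Gram matrix $(u)$. *)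

(* Defs.v *)
From mathcomp Require Import all_boot all_algebra.
Set Implicit Arguments. Unset Strict Implicit. Unset Printing Implicit Defensive.
Import GRing.Theory.
Local Open Scope ring_scope.

(* Rows 0..n-1 hold the
   coefficients of X^i * A, rows n..2n-1 those of X^(i-n) * B.
   (Any other row/column ordering convention only changes the sign.) *)
Definition sylvester_nn (k : fieldType) (n : nat) (A B : {poly k}) : 'M[k]_(n + n) :=
  \matrix_(i < n + n, j < n + n)
     (if (i < n)%N then ('X^i * A)`_j else ('X^(i - n) * B)`_j).

Definition res_nn (k : fieldType) (n : nat) (A B : {poly k}) : k :=
  \det (sylvester_nn n A B).

Definition in_Fn (k : fieldType) (n : nat) (A B : {poly k}) : Prop :=
  [/\ A \is monic, size A = n.+1, (size B <= n)%N & res_nn n A B != 0].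

(* Bezout form Bez_n(A,B): Gram matrix [c_{p,q}] where
   (A(X)B(Y) - A(Y)B(X)) / (X - Y) = sum c_{p,q} X^(p-1) Y^(q-1).
   Bivariate polynomials are {poly {poly k}}: the inner variable is X
   (p%:P embeds p(X)), the outer variable is Y (p^:P embeds p(Y)). *)
Definition bezout_quot (k : fieldType) (A B : {poly k}) : {poly {poly k}} :=
  (A%:P * B^:P - A^:P * B%:P) %/ ('X%:P - 'X).

Definition bezout_mx (k : fieldType) (n : nat) (A B : {poly k}) : 'M[k]_n :=
  \matrix_(p < n, q < n) ((bezout_quot A B)`_q)`_p.

(* X/u (+)^N A/B = (X A - B/u) / (u A), given as a (numerator, denominator) pair. *)
Definition oplusN_Xu (k : fieldType) (u : k) (A B : {poly k}) : {poly k} * {poly k} :=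
  ('X * A - u^-1 *: B, u *: A).

(* Main.v *)
Require Import Defs.
From mathcomp Require Import all_boot all_algebra ring.
Import GRing.Theory.
Local Open Scope ring_scope.

Lemma mapC_hornerX (k : fieldType) (B : {poly k}) : (B^:P).['X] = B.
Proof.
rewrite horner_coef size_map_polyC.
transitivity (\sum_(i < size B) B`_i *: 'X^i); last by rewrite -poly_def coefK.
by apply: eq_bigr => i _; rewrite coef_map /= mul_polyC.
Qed.

Lemma bezout_factor (k : fieldType) (A B : {poly k}) :
  exists q : {poly {poly k}},
    A%:P * B^:P - A^:P * B%:P = q * ('X%:P - 'X).
Proof.
have /factor_theorem [q Hq] : root (A%:P * B^:P - A^:P * B%:P) ('X : {poly k}).
  by rewrite /root !hornerE !mapC_hornerX mulrC subrr.
exists (- q); rewrite Hq; ring.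
Qed.

Lemma ulcd (k : fieldType) : lead_coef (('X : {poly k})%:P - 'X) \in GRing.unit.
Proof.
by rewrite -opprB lead_coefN lead_coefXsubC unitrN unitr1.
Qed.

Lemma bq_eq (k : fieldType) (A B : {poly k}) q :
  A%:P * B^:P - A^:P * B%:P = q * ('X%:P - 'X) -> bezout_quot A B = q.
Proof. by move=> Hq; rewrite /bezout_quot Hq (Pdiv.IdomainUnit.mulpK (ulcd k)). Qed.

Lemma bq_oplus (k : fieldType) (A B : {poly k}) (u : k) q : u != 0 ->
  A%:P * B^:P - A^:P * B%:P = q * ('X%:P - 'X) ->
  bezout_quot (oplusN_Xu u A B).1 (oplusN_Xu u A B).2 =
    q + (u%:P * A)%:P * A^:P.
Proof.
move=> u0 Hq; apply: bq_eq.
rewrite /= -!mul_polyC !rmorphB !rmorphM /= !map_polyC /= map_polyX.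
set uu := (u%:P)%:P; set vv := (u^-1%:P)%:P.
have Huv : uu * vv = 1 by rewrite /uu /vv -!polyCM mulfV // .
rewrite [RHS]mulrDl -Hq.
set a := A%:P; set a' := A^:P; set b := B%:P; set b' := B^:P; transitivity ((a * b' - a' * b) + uu * a * a' * (('X : {poly k})%:P - 'X) + (uu * vv - 1) * (a * b' - a' * b)).
  ring.
by rewrite Huv subrr mul0r addr0.
Qed.

Lemma coef_extra (k : fieldType) (A : {poly k}) (u : k) i j :
  ((((u%:P * A)%:P * A^:P) : {poly {poly k}})`_j)`_i = u * A`_i * A`_j.
Proof. by rewrite coefCM coef_map /= coefMC coefCM. Qed.

Lemma size_d (k : fieldType) : size ((('X : {poly k})%:P - 'X) : {poly {poly k}}) = 2.
Proof. by rewrite -opprB size_polyN size_XsubC. Qed.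

Lemma size_CM (R : idomainType) (c : R) (p : {poly R}) : (size (c%:P * p)%R <= size p)%N.
Proof. by rewrite mul_polyC size_scale_leq. Qed.

Lemma q_deg (k : fieldType) (n : nat) (A B : {poly k}) q :
  (size A <= n.+1)%N -> (size B <= n)%N ->
  A%:P * B^:P - A^:P * B%:P = q * ('X%:P - 'X) ->
  q`_n = 0 /\ forall j, (q`_j)`_n = 0.
Proof.
move=> sA sB Hq; split.
  have [->|q0] := eqVneq q 0; first by rewrite coef0.
  apply: nth_default.
  have : (size (q * ('X%:P - 'X))%R <= n.+1)%N.
    rewrite -Hq; apply: leq_trans (size_polyD _ _) _; rewrite size_polyN geq_max.
    apply/andP; split.
      by apply: leq_trans (@size_CM _ A B^:P) _; rewrite size_map_polyC; apply: leq_trans sB _.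
    by rewrite mulrC; apply: leq_trans (@size_CM _ B A^:P) _; rewrite size_map_polyC.
  rewrite size_mul ?size_d //; last by rewrite -size_poly_eq0 size_d.
  by rewrite addn2.
move=> j; apply: nth_default.
elim: j => [|j IH].
- have := congr1 (fun p : {poly {poly k}} => p`_0) Hq.
  rewrite /= mulrBr !coefB coefMX !coefMC coefCM !coef_map /= subr0 => E.
  have [->|q0] := eqVneq q`_0 0; first by rewrite size_poly0.
  have : (size (q`_0 * 'X)%R <= n.+1)%N.
    rewrite -E; apply: leq_trans (size_polyD _ _) _; rewrite size_polyN geq_max.
    apply/andP; split.
      by rewrite mulrC; apply: leq_trans (@size_CM _ _ A) _.
    by apply: leq_trans (@size_CM _ _ B) _; apply: leq_trans sB _.
  by rewrite size_mulX.
- have := congr1 (fun p : {poly {poly k}} => p`_j.+1) Hq.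
  rewrite /= mulrBr !coefB coefMX !coefMC coefCM !coef_map /= => E.
  have [->|q0] := eqVneq q`_j.+1 0; first by rewrite size_poly0.
  have : (size (q`_j.+1 * 'X)%R <= n.+1)%N.
    have -> : q`_j.+1 * 'X = (A * (B`_j.+1)%:P - (A`_j.+1)%:P * B) + q`_j.
      by rewrite E subrK.
    apply: leq_trans (size_polyD _ _) _; rewrite geq_max; apply/andP; split; last first.
      by apply: leq_trans IH _.
    apply: leq_trans (size_polyD _ _) _; rewrite size_polyN geq_max.
    apply/andP; split.
      by rewrite mulrC; apply: leq_trans (@size_CM _ _ A) _.
    by apply: leq_trans (@size_CM _ _ B) _; apply: leq_trans sB _.
  by rewrite size_mulX.
Qed.

Lemma sum_delta (T : finType) (R : nzRingType) (F : T -> R) c :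
  \sum_r (r == c)%:R * F r = F c.
Proof.
rewrite (bigD1 c) //= eqxx mul1r big1 ?addr0 // => r /negbTE ->.
by rewrite mul0r.
Qed.

Section Mat.
Variables (k : fieldType) (n : nat) (a : nat -> k) (s : k).

Definition Pmx : 'M[k]_(1 + n) :=
  \matrix_(r, c) (match unlift ord0 c with
                  | Some c' => (r == widen_ord (leqnSn n) c')%:R - (r == ord_max)%:R * a c'
                  | None => (r == ord_max)%:R * s end).

Lemma sumP0 (F : 'I_(1+n) -> k) : \sum_r Pmx r ord0 * F r = s * F ord_max.
Proof.
rewrite -(@sum_delta _ _ F ord_max) mulr_sumr; apply: eq_bigr => r _.
by rewrite mxE unlift_none; ring.
Qed.

Lemma sumPl (F : 'I_(1+n) -> k) j :
  \sum_r Pmx r (lift ord0 j) * F r = F (widen_ord (leqnSn n) j) - a j * F ord_max.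
Proof.
rewrite -(@sum_delta _ _ F ord_max) -(@sum_delta _ _ F (widen_ord (leqnSn n) j)).
rewrite mulr_sumr -sumrB; apply: eq_bigr => r _.
rewrite mxE liftK; ring.
Qed.

Lemma detP : s * (-1) ^+ n = 1 -> \det Pmx = 1.
Proof.
move=> hs.
rewrite (expand_det_col _ ord0).
have -> : \sum_i Pmx i ord0 * cofactor Pmx i ord0 = s * cofactor Pmx ord_max ord0.
  by rewrite (sumP0 (fun i => cofactor Pmx i ord0)).
rewrite /cofactor.
have -> : row' ord_max (col' ord0 Pmx) = 1%:M.
  apply/matrixP => x y; rewrite !mxE liftK.
  have -> : (lift ord_max x == ord_max) = false.
    by apply/negbTE; rewrite -val_eqE /= /bump leqNgt ltn_ord add0n neq_ltn ltn_ord.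
  have -> : (lift ord_max x == widen_ord (leqnSn n) y) = (x == y).
    by rewrite -val_eqE /= /bump leqNgt ltn_ord add0n val_eqE.
  by rewrite mul0r subr0.
by rewrite det1 mulr1 /= addn0.
Qed.

End Mat.

Theorem lemma3p15 (k : fieldType) (n : nat) (A B : {poly k}) (u : k) :
  in_Fn n A B -> u != 0 ->
  exists P : 'M[k]_(1 + n),
    \det P = 1 /\
    P^T *m bezout_mx (1 + n) (oplusN_Xu u A B).1 (oplusN_Xu u A B).2 *m P
    = block_mx (u%:M : 'M[k]_1) 0 0 (bezout_mx n A B).
Proof.
case=> monA sA sB _ u0.
have [q Hq] := bezout_factor _ A B.
have HQ := bq_eq _ _ _ _ Hq.
have HQ3 := bq_oplus _ _ _ _ _ u0 Hq.
have [qn qjn] := q_deg _ _ _ _ _ (eq_leq sA) sB Hq.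
have An : A`_n = 1 by move/monicP: monA; rewrite lead_coefE sA.
set s : k := (-1) ^+ n.
have hs : s * (-1) ^+ n = 1 by rewrite -exprD -signr_odd oddD addbb.
exists (Pmx _ n (fun j => A`_j) s); split; first exact: (detP _ n (fun j => A`_j) s hs).
set M := bezout_mx _ _ _.
have ME : forall r c : 'I_(1 + n), M r c = (q`_c)`_r + u * A`_r * A`_c.
  by move=> r c; rewrite /M mxE HQ3 !coefD (coef_extra _ A u).
have PM0 : forall c, ((Pmx _ n (fun j => A`_j) s)^T *m M) ord0 c = s * M ord_max c.
  move=> c; rewrite mxE (eq_bigr (fun r => Pmx _ n (fun j => A`_j) s r ord0 * M r c)).
    exact: (sumP0 _ n (fun j => A`_j) s (fun r => M r c)).
  by move=> r _; rewrite mxE.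
have PMl : forall i c, ((Pmx _ n (fun j => A`_j) s)^T *m M) (lift ord0 i) c =
   M (widen_ord (leqnSn n) i) c - A`_i * M ord_max c.
  move=> i c; rewrite mxE (eq_bigr (fun r => Pmx _ n (fun j => A`_j) s r (lift ord0 i) * M r c)).
    exact: (sumPl _ n (fun j => A`_j) s (fun r => M r c)).
  by move=> r _; rewrite mxE.
apply/matrixP => i j.
rewrite mxE.
case: (unliftP ord0 j) => [j'|] ->.
- rewrite (eq_bigr (fun r => Pmx _ n (fun j => A`_j) s r (lift ord0 j') * ((Pmx _ n (fun j => A`_j) s)^T *m M) i r)); last by move=> r _; rewrite mulrC.
  rewrite (sumPl _ n (fun j => A`_j) s).
  case: (unliftP ord0 i) => [i'|] ->.
  + rewrite !PMl !ME /= ?qn ?qjn ?coef0 ?An.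
    have -> : lift ord0 i' = rshift 1 i' by apply: val_inj.
    have -> : lift ord0 j' = rshift 1 j' by apply: val_inj.
    rewrite block_mxEdr mxE HQ.
    ring.
  + rewrite !PM0 !ME /= ?qn ?qjn ?coef0 ?An.
    have -> : lift ord0 j' = rshift 1 j' by apply: val_inj.
    have -> : (ord0 : 'I_(1+n)) = lshift n (ord0 : 'I_1) by apply: val_inj.
    rewrite block_mxEur mxE.
    ring.
- rewrite (eq_bigr (fun r => Pmx _ n (fun j => A`_j) s r ord0 * ((Pmx _ n (fun j => A`_j) s)^T *m M) i r)); last by move=> r _; rewrite mulrC.
  rewrite (sumP0 _ n (fun j => A`_j) s).
  case: (unliftP ord0 i) => [i'|] ->.
  + rewrite !PMl !ME /= ?qn ?qjn ?coef0 ?An.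
    have -> : lift ord0 i' = rshift 1 i' by apply: val_inj.
    have -> : (ord0 : 'I_(1+n)) = lshift n (ord0 : 'I_1) by apply: val_inj.
    rewrite block_mxEdl mxE.
    ring.
  + rewrite !PM0 !ME /= ?qn ?qjn ?coef0 ?An.
    have -> : (ord0 : 'I_(1+n)) = lshift n (ord0 : 'I_1) by apply: val_inj.
    rewrite block_mxEul mxE eqxx mulr1n.
    transitivity (u * (s * (-1) ^+ n)); first by rewrite /s; ring.
    by rewrite hs mulr1.
Qed.
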